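(* Let $x,y$ be allocation rules of $n$-agent rank-based auctions, with $b$ the equilibrium bid function of the all-pay auction with rule $x$. If $\delta_N\le 1/n$, then $Z_y(\delta_N)\,b(\delta_N)\le e\,\delta_N\,y'(\delta_N)$.
   Context: Agents have values i.i.d. from a continuous distribution $F$ on $[0,1]$; quantile $q=F(v)$, $v(q)=F^{-1}(q)$. For $k\in\{1,\dots,n-1\}$ the $k$-highest-bids-win allocation rule is $x_k(q)=\sum_{i=0}^{k-1}\binom{n-1}{i}q^{n-1-i}(1-q)^i$; $x_0\equiv0$, $x_n\equiv1$. A rank-based auction with position weights $1\ge w_1\ge\cdots\ge w_n\ge 0$ ($w_{n+1}:=0$) has allocation rule $\sum_{k=1}^{n}(w_k-w_{k+1})x_k(q)$. The all-pay Bayes–Nash equilibrium bid function for rule $x$ satisfies $b(0)=0$, $b'(q)=v(q)x'(q)$. $Z_y(q)=(1-q)\,y'(q)/x'(q)$. $\delta_N=\max(25\log\log N,n)/N$. *)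

(* Defs.v *)
From Stdlib Require Import Reals Lra Lia.
Open Scope R_scope.

(* k-highest-bids-win allocation rule for n agents:
   x_k(q) = sum_{i=0}^{k-1} C(n-1,i) q^(n-1-i) (1-q)^i  for 1 <= k <= n-1,
   x_0 = 0, x_n = 1. *)
Definition xk (n k : nat) (q : R) : R :=
  if (k =? 0)%nat then 0
  else if (n <=? k)%nat then 1
  else sum_f_R0 (fun i => C (n - 1) i * q ^ (n - 1 - i) * (1 - q) ^ i) (k - 1).

Definition wext (n : nat) (w : nat -> R) (k : nat) : R :=
  if (k <=? n)%nat then w k else 0.

Definition valid_weights (n : nat) (w : nat -> R) : Prop :=
  w 1%nat <= 1 /\
  (forall k, (1 <= k)%nat -> (k < n)%nat -> w (S k) <= w k) /\
  0 <= w n.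

Definition rank_alloc (n : nat) (w : nat -> R) (q : R) : R :=
  sum_f_R0 (fun j => (wext n w (S j) - wext n w (S (S j))) * xk n (S j) q) (n - 1).

Definition is_rank_alloc (n : nat) (x : R -> R) : Prop :=
  exists w : nat -> R, valid_weights n w /\ forall q, x q = rank_alloc n w q.

Definition is_cont_cdf01 (F : R -> R) : Prop :=
  (forall t, continuity_pt F t) /\
  (forall s t, s <= t -> F s <= F t) /\
  F 0 = 0 /\ F 1 = 1.

Definition is_quantile (F v : R -> R) : Prop :=
  forall q, 0 <= q <= 1 ->
    0 <= v q <= 1 /\ q <= F (v q) /\
    (forall t, 0 <= t <= 1 -> q <= F t -> v q <= t).

Definition Zy (x' y' : R -> R) (q : R) : R := (1 - q) * y' q / x' q.

Definition deltaN (n N : nat) : R := Rmax (25 * ln (ln (INR N))) (INR n) / INR N.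

(* Main.v *)
Require Import Defs.
From Stdlib Require Import Reals Lra Lia.
Open Scope R_scope.

Lemma dpl_ext f g x l : (forall t, f t = g t) -> derivable_pt_lim f x l -> derivable_pt_lim g x l.
Proof. intros H D e He. destruct (D e He) as [d Hd]. exists d. intros h h0 hd.
  rewrite <- !H. apply Hd; auto. Qed.

Lemma dpl_val f x l1 l2 : l1 = l2 -> derivable_pt_lim f x l1 -> derivable_pt_lim f x l2.
Proof. intros ->; auto. Qed.

Lemma dpoly a b q : derivable_pt_lim (fun t => t^a * (1-t)^b) q
  (INR a * q^(pred a) * (1-q)^b - INR b * q^a * (1-q)^(pred b)).
Proof.
  assert (H1 : derivable_pt_lim (fun t => (1-t)^b) q (INR b * (1-q)^(pred b) * (-1))).
  { apply (derivable_pt_lim_comp (fun t => 1 - t) (fun y => y^b)).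
    - apply dpl_val with (0 - 1). ring.
      apply derivable_pt_lim_minus. apply derivable_pt_lim_const. apply derivable_pt_lim_id.
    - apply derivable_pt_lim_pow. }
  apply dpl_val with (INR a * q ^ pred a * (1-q)^b + q^a * (INR b * (1-q)^(pred b) * (-1))). ring.
  apply (derivable_pt_lim_mult (fun t => t^a) (fun t => (1-t)^b)).
  apply derivable_pt_lim_pow. exact H1.
Qed.

Lemma dsum (f : nat -> R -> R) (df : nat -> R -> R) q n :
  (forall i, (i <= n)%nat -> derivable_pt_lim (f i) q (df i q)) ->
  derivable_pt_lim (fun t => sum_f_R0 (fun i => f i t) n) q (sum_f_R0 (fun i => df i q) n).
Proof.
  induction n; intros H; simpl.
  - apply H; lia.
  - apply (derivable_pt_lim_plus (fun t => sum_f_R0 (fun i => f i t) n) (f (S n))).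
    apply IHn; intros; apply H; lia. apply H; lia.
Qed.

Lemma binom_step m j p : m = (j + p + 2)%nat ->
  C m (S j) * INR (S j) = C m j * INR (p + 2).
Proof.
  intros ->. unfold C.
  replace (j + p + 2 - S j)%nat with (S p) by lia.
  replace (j + p + 2 - j)%nat with (S (S p)) by lia.
  replace (p+2)%nat with (S (S p)) by lia.
  rewrite (fact_simpl j), (fact_simpl (S p)). rewrite !mult_INR.
  pose proof (INR_fact_neq_0 j). pose proof (INR_fact_neq_0 (S p)).
  pose proof (INR_fact_neq_0 (j+p+2)). rewrite !S_INR in *.
  pose proof (pos_INR j); pose proof (pos_INR p).
  field. repeat split; lra.
Qed.

Definition Tm (m i : nat) (q : R) := C m i * (q^(m-i) * (1-q)^i).

Lemma dpartial m j p q : m = (j + p + 1)%nat ->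
  derivable_pt_lim (fun t => sum_f_R0 (fun i => Tm m i t) j) q
    (INR (S p) * C m j * q^p * (1-q)^j).
Proof.
  revert p. induction j; intros p Hm.
  - simpl. apply dpl_val with (C m 0 * (INR (m - 0) * q ^ pred (m-0) * (1 - q) ^ 0 - INR 0 * q ^ (m-0) * (1 - q) ^ pred 0)).
    { replace (m - 0)%nat with (S p) by lia. simpl pred. simpl. ring. }
    unfold Tm. apply derivable_pt_lim_scal. apply dpoly.
  - simpl sum_f_R0.
    apply dpl_val with (INR (S (S p)) * C m j * q ^ (S p) * (1 - q) ^ j +
       C m (S j) * (INR (m - S j) * q ^ pred (m - S j) * (1 - q) ^ (S j) - INR (S j) * q ^ (m - S j) * (1 - q) ^ pred (S j))).
    { replace (m - S j)%nat with (S p) by lia. simpl pred.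
      assert (HB := binom_step m j p ltac:(lia)).
      replace (p+2)%nat with (S (S p)) in HB by lia.
      simpl pow. 
      replace (C m (S j) * (INR (S p) * q ^ p * ((1 - q) * (1 - q) ^ j) - INR (S j) * (q * q ^ p) * (1 - q) ^ j))
        with (C m (S j) * INR (S p) * q ^ p * ((1 - q) * (1 - q) ^ j) - (C m (S j) * INR (S j)) * (q * q ^ p) * (1 - q) ^ j) by ring.
      rewrite HB. rewrite !S_INR. ring. }
    apply (derivable_pt_lim_plus (fun t => sum_f_R0 (fun i => Tm m i t) j) (Tm m (S j))).
    + apply IHj. lia.
    + unfold Tm. apply derivable_pt_lim_scal. apply dpoly.
Qed.

Definition xkd (n k : nat) (q : R) : R :=
  if (n <=? k)%nat then 0
  else INR (n - k) * C (n - 1) (k - 1) * q ^ (n - 1 - k) * (1 - q) ^ (k - 1).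

Lemma dxk n k q : (1 <= k)%nat -> derivable_pt_lim (xk n k) q (xkd n k q).
Proof.
  intros Hk. unfold xkd.
  destruct (n <=? k)%nat eqn:E.
  - apply dpl_ext with (fun _ => 1).
    { intros t. unfold xk. destruct (k =? 0)%nat eqn:E0. apply Nat.eqb_eq in E0; lia. rewrite E; auto. }
    apply derivable_pt_lim_const.
  - apply Nat.leb_gt in E.
    apply dpl_ext with (fun t => sum_f_R0 (fun i => Tm (n-1) i t) (k-1)).
    { intros t. unfold xk. destruct (k =? 0)%nat eqn:E0. apply Nat.eqb_eq in E0; lia.
      destruct (n <=? k)%nat eqn:E1. apply Nat.leb_le in E1; lia.
      apply sum_eq. intros i _. unfold Tm. ring. }
    apply dpl_val with (INR (S (n - 1 - k)) * C (n-1) (k-1) * q ^ (n - 1 - k) * (1 - q) ^ (k - 1)).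
    { replace (S (n - 1 - k)) with (n - k)%nat by lia. reflexivity. }
    apply dpartial. lia.
Qed.

Definition Drank (n : nat) (w : nat -> R) (q : R) : R :=
  sum_f_R0 (fun j => (wext n w (S j) - wext n w (S (S j))) * xkd n (S j) q) (n - 1).

Lemma drank n w q : derivable_pt_lim (rank_alloc n w) q (Drank n w q).
Proof.
  unfold Drank.
  apply dpl_ext with (fun t => sum_f_R0 (fun j => (fun j t => (wext n w (S j) - wext n w (S (S j))) * xk n (S j) t) j t) (n-1)).
  { intros; reflexivity. }
  apply (dsum (fun j t => (wext n w (S j) - wext n w (S (S j))) * xk n (S j) t)
              (fun j t => (wext n w (S j) - wext n w (S (S j))) * xkd n (S j) t)).
  intros i _. apply derivable_pt_lim_scal. apply dxk. lia.
Qed.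

Lemma coef_nonneg n w j : valid_weights n w -> (j <= n - 1)%nat -> (1 <= n)%nat ->
  0 <= wext n w (S j) - wext n w (S (S j)).
Proof.
  intros [H1 [H2 H3]] Hj Hn. unfold wext.
  destruct (S j <=? n)%nat eqn:E1; [|apply Nat.leb_gt in E1; lia].
  destruct (S (S j) <=? n)%nat eqn:E2.
  - apply Nat.leb_le in E2. assert (H := H2 (S j) ltac:(lia) ltac:(lia)). lra.
  - apply Nat.leb_gt in E2. replace (S j) with n by lia. lra.
Qed.

Lemma C_nonneg m i : 0 <= C m i.
Proof. unfold C. unfold Rdiv. apply Rmult_le_pos. apply pos_INR.
  left. apply Rinv_0_lt_compat. apply Rmult_lt_0_compat; apply INR_fact_lt_0. Qed.

Lemma xkd_nonneg n k q : 0 <= q <= 1 -> 0 <= xkd n k q.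
Proof.
  intros Hq. unfold xkd. destruct (n <=? k)%nat. lra.
  apply Rmult_le_pos. apply Rmult_le_pos. apply Rmult_le_pos. apply pos_INR. apply C_nonneg.
  apply pow_le; lra. apply pow_le; lra.
Qed.

Lemma Drank_nonneg n w q : valid_weights n w -> (1 <= n)%nat -> 0 <= q <= 1 -> 0 <= Drank n w q.
Proof.
  intros V Hn Hq. unfold Drank. apply cond_pos_sum. intros j.
  destruct (Compare_dec.le_lt_dec j (n-1)).
  - apply Rmult_le_pos. apply coef_nonneg; auto. apply xkd_nonneg; auto.
  - unfold xkd. replace ((n <=? S j)%nat) with true. lra. symmetry; apply Nat.leb_le; lia.
Qed.

Lemma pow_le_one x k : 0 <= x <= 1 -> x ^ k <= 1.
Proof. intros H; induction k; simpl. lra.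
  replace 1 with (1*1) by ring. apply Rmult_le_compat; try lra. apply pow_le; lra. Qed.

Lemma pow_decr x a b : 0 <= x <= 1 -> (a <= b)%nat -> x ^ b <= x ^ a.
Proof. intros H Hab. replace b with (a + (b - a))%nat by lia. rewrite pow_add.
  replace (x^a) with (x^a*1) at 2 by ring. apply Rmult_le_compat_l. apply pow_le; lra.
  apply pow_le_one; auto. Qed.

Lemma exp_pow x k : exp x ^ k = exp (INR k * x).
Proof. induction k. simpl. rewrite Rmult_0_l, exp_0. reflexivity.
  simpl pow. rewrite IHk, <- exp_plus, S_INR. f_equal. ring. Qed.

Lemma e_bound m d : (1 <= m)%nat -> 0 <= d <= 1 / INR (S m) -> 1 <= exp 1 * (1 - d) ^ m.
Proof.
  intros Hm Hd. assert (Hm0 : 0 < INR m) by (apply lt_0_INR; lia).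
  rewrite S_INR in Hd.
  assert (E1 : (1 + 1 / INR m) ^ m <= exp 1).
  { replace (exp 1) with (exp (1 / INR m) ^ m).
    apply pow_incr. split. assert (0 < 1 / INR m) by (apply Rdiv_lt_0_compat; lra). lra.
    apply exp_ineq1_le. rewrite exp_pow. f_equal. field. lra. }
  assert (E2 : (INR m / (INR m + 1)) ^ m <= (1 - d) ^ m).
  { apply pow_incr. split. apply Rle_mult_inv_pos; lra.
    assert (1 / (INR m + 1) = 1 - INR m / (INR m + 1)) by (field; lra). lra. }
  apply Rle_trans with ((1 + 1 / INR m) ^ m * (INR m / (INR m + 1)) ^ m).
  { rewrite <- Rpow_mult_distr. replace ((1 + 1 / INR m) * (INR m / (INR m + 1))) with 1.
    rewrite pow1. lra. field. lra. }
  apply Rmult_le_compat; try lra. apply pow_le. assert (0 < 1 / INR m) by (apply Rdiv_lt_0_compat; lra). lra.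
  apply pow_le. apply Rle_mult_inv_pos; lra.
Qed.

Lemma key n k r d : (1 <= k)%nat -> 0 <= r <= d -> d < 1 -> 1 <= exp 1 * (1 - d) ^ (n - 1) ->
  (1 - d) * xkd n k r <= exp 1 * xkd n k d.
Proof.
  intros Hk Hr Hd E. unfold xkd. destruct (n <=? k)%nat eqn:Hnk. lra.
  apply Nat.leb_gt in Hnk.
  set (A := INR (n - k) * C (n - 1) (k - 1)).
  assert (HA : 0 <= A) by (apply Rmult_le_pos; [apply pos_INR|apply C_nonneg]).
  assert (P1 : r ^ (n - 1 - k) <= d ^ (n - 1 - k)) by (apply pow_incr; lra).
  assert (P2 : (1 - r) ^ (k - 1) <= 1) by (apply pow_le_one; lra).
  assert (P3 : 0 <= (1 - r) ^ (k - 1)) by (apply pow_le; lra).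
  assert (P4 : 0 <= r ^ (n - 1 - k)) by (apply pow_le; lra).
  assert (P5 : (1 - d) ^ (n - 1) <= (1 - d) ^ (k - 1)) by (apply pow_decr; [lra|lia]).
  assert (P6 : 1 - d <= exp 1 * (1 - d) ^ (k - 1)).
  { assert (0 < exp 1) by apply exp_pos. assert (exp 1 * (1-d)^(n-1) <= exp 1 * (1-d)^(k-1)) by (apply Rmult_le_compat_l; lra). lra. }
  apply Rle_trans with (A * d ^ (n - 1 - k) * (1 - d)).
  - replace ((1 - d) * (A * r ^ (n - 1 - k) * (1 - r) ^ (k - 1))) with
      (A * (r ^ (n - 1 - k) * (1 - r) ^ (k - 1)) * (1 - d)) by ring.
    apply Rmult_le_compat_r. lra. apply Rmult_le_compat_l. auto.
    replace (d ^ (n - 1 - k)) with (d ^ (n - 1 - k) * 1) by ring.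
    apply Rmult_le_compat; auto.
  - replace (exp 1 * (A * d ^ (n - 1 - k) * (1 - d) ^ (k - 1))) with
      (A * d ^ (n - 1 - k) * (exp 1 * (1 - d) ^ (k - 1))) by ring.
    apply Rmult_le_compat_l; auto. apply Rmult_le_pos; auto. apply pow_le; lra.
Qed.

Lemma sum_cmp a c f g N : (forall j, (j <= N)%nat -> a * f j <= c * g j) ->
  a * sum_f_R0 f N <= c * sum_f_R0 g N.
Proof. induction N; intros H; simpl. apply H; lia.
  rewrite !Rmult_plus_distr_l. apply Rplus_le_compat. apply IHN; intros; apply H; lia. apply H; lia. Qed.

Lemma Drank_key n w r d : valid_weights n w -> (1 <= n)%nat -> 0 <= r <= d -> d < 1 ->
  1 <= exp 1 * (1 - d) ^ (n - 1) -> (1 - d) * Drank n w r <= exp 1 * Drank n w d.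
Proof.
  intros V Hn Hr Hd E. unfold Drank. apply sum_cmp. intros j Hj.
  assert (Hc := coef_nonneg n w j V Hj Hn).
  assert (Hk := key n (S j) r d ltac:(lia) Hr Hd E).
  set (c := wext n w (S j) - wext n w (S (S j))) in *.
  replace ((1 - d) * (c * xkd n (S j) r)) with (c * ((1 - d) * xkd n (S j) r)) by ring.
  replace (exp 1 * (c * xkd n (S j) d)) with (c * (exp 1 * xkd n (S j) d)) by ring.
  apply Rmult_le_compat_l; auto.
Qed.

Theorem mainTheorem11 (n N : nat) (F v x y x' y' b : R -> R) :
  (1 <= n)%nat ->
  is_cont_cdf01 F ->
  is_quantile F v ->
  is_rank_alloc n x ->
  is_rank_alloc n y ->
  (forall q, derivable_pt_lim x q (x' q)) ->
  (forall q, derivable_pt_lim y q (y' q)) ->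
  (forall q, 0 <= q <= 1 ->
     exists pr : Riemann_integrable (fun r => v r * x' r) 0 q, b q = RiemannInt pr) ->
  deltaN n N <= 1 / INR n ->
  Zy x' y' (deltaN n N) * b (deltaN n N) <= exp 1 * deltaN n N * y' (deltaN n N).
Proof.
  intros Hn _ Hv [wx [Vx Ex]] [wy [Vy Ey]] Dx Dy Hb Hd.
  assert (EX : forall q, x' q = Drank n wx q).
  { intros q. apply (uniqueness_limite x q). auto.
    apply dpl_ext with (rank_alloc n wx). intros; symmetry; auto. apply drank. }
  assert (EY : forall q, y' q = Drank n wy q).
  { intros q. apply (uniqueness_limite y q). auto.
    apply dpl_ext with (rank_alloc n wy). intros; symmetry; auto. apply drank. }
  set (d := deltaN n N) in *.
  assert (Hn0 : 1 <= INR n) by (apply (le_INR 1); lia).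
  assert (Hd0 : 0 <= d).
  { unfold d, deltaN. destruct N as [|N'].
    - simpl INR. rewrite Rdiv_0_r. lra.
    - apply Rle_mult_inv_pos. apply Rle_trans with (INR n). lra. apply Rmax_r.
      apply lt_0_INR. lia. }
  assert (Hd1 : d <= 1).
  { apply Rle_trans with (1 / INR n); auto. unfold Rdiv. rewrite Rmult_1_l.
    rewrite <- Rinv_1. apply Rinv_le_contravar; lra. }
  assert (Hyp : 0 <= y' d) by (rewrite EY; apply Drank_nonneg; auto; lra).
  assert (He : 0 < exp 1) by apply exp_pos.
  assert (RHS : 0 <= exp 1 * d * y' d) by (apply Rmult_le_pos; [apply Rmult_le_pos|]; lra).
  assert (Hxp : 0 <= x' d) by (rewrite EX; apply Drank_nonneg; auto; lra).
  destruct (Rle_lt_or_eq_dec _ _ Hxp) as [Hpos | Hzero].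
  2:{ unfold Zy. rewrite <- Hzero, Rdiv_0_r, Rmult_0_l. auto. }
  assert (Hn2 : (2 <= n)%nat).
  { destruct (Nat.eq_dec n 1) as [E|E]; [|lia]. exfalso.
    rewrite EX in Hpos. unfold Drank in Hpos. subst n. simpl in Hpos.
    unfold xkd in Hpos. simpl in Hpos. lra. }
  assert (Hn2' : 2 <= INR n) by (apply (le_INR 2); lia).
  assert (Hdh : d < 1).
  { apply Rle_lt_trans with (1 / INR n); auto. apply Rmult_lt_reg_l with (INR n). lra.
    field_simplify; lra. }
  assert (E : 1 <= exp 1 * (1 - d) ^ (n - 1)).
  { apply e_bound. lia. replace (S (n-1)) with n by lia. lra. }
  destruct (Hb d ltac:(lra)) as [pr Hbd].
  set (K := exp 1 * x' d / (1 - d)).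
  assert (Hint : b d <= K * d).
  { rewrite Hbd. replace (K * d) with (K * (d - 0)) by ring.
    rewrite <- (RiemannInt_P15 (RiemannInt_P14 0 d K)).
    apply RiemannInt_P19; auto. intros r Hr. unfold fct_cte.
    destruct (Hv r ltac:(lra)) as [[Hv0 Hv1] _].
    assert (Hxr : 0 <= x' r) by (rewrite EX; apply Drank_nonneg; auto; lra).
    assert (Hk : (1 - d) * x' r <= exp 1 * x' d).
    { rewrite !EX. apply Drank_key; auto; lra. }
    apply Rle_trans with (x' r).
    { replace (x' r) with (1 * x' r) at 2 by ring. apply Rmult_le_compat_r; lra. }
    unfold K. apply Rmult_le_reg_l with (1 - d). lra.
    replace ((1 - d) * (exp 1 * x' d / (1 - d))) with (exp 1 * x' d) by (field; lra). lra. }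
  unfold Zy.
  apply Rle_trans with ((1 - d) * y' d / x' d * (K * d)).
  - apply Rmult_le_compat_l; auto. apply Rle_mult_inv_pos; [apply Rmult_le_pos|]; lra.
  - right. unfold K. field. lra.
Qed.
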